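(* Let $\mathcal{G}=(V,\mathcal{E})$ be a plurigraph with $V=[n]$. Then $$Y_{\mathcal{G}}=\sum_{A\subseteq\mathcal{E}}(-1)^{|A|}p_{\pi(A)},$$ where the sum is over all sub-multisets $A$ of $\mathcal{E}$ (the elements of $\mathcal{E}$ being regarded as distinct, so there are $2^{|\mathcal{E}|}$ terms).
   Context: Work over a field $\mathbb{K}$ of characteristic zero with noncommuting variables $y_1,y_2,\dots$, $\mathbb{P}=\{1,2,\dots\}$. A graph $(V,E)$ has $E$ a finite multiset of unordered pairs of (not necessarily distinct) vertices. A plurigraph is $\mathcal{G}=(V,\mathcal{E})$ with $\mathcal{E}$ a finite multiset of graphs $(V,E)$ on vertex set $V$ with $E\ne\emptyset$. A proper coloring is $f:V\to\mathbb{P}$ such that each $(V,E)\in\mathcal{E}$ has an edge $uv\in E$ with $f(u)\ne f(v)$; $Y_{\mathcal{G}}=\sum_f y_{f(1)}\cdots y_{f(n)}$ over proper colorings. For a set partition $\pi$ of $[n]$, $m_\pi=\sum y_{i_1}\cdots y_{i_n}$ over sequences $(i_1,\dots,i_n)\in\mathbb{P}^n$ with $i_j=i_k$ iff $j,k$ lie in the same block of $\pi$, and $p_\pi=\sum_{\sigma\ge\pi}m_\sigma$, the sum over set partitions $\sigma$ of $[n]$ coarser than or equal to $\pi$. For $A=\{(V,E_1),\dots,(V,E_k)\}\subseteq\mathcal{E}$, $\pi(A)$ is the partition of $V$ into connected components of the graph $(V,\bigcup_{i}E_i)$ (for $A=\emptyset$ this is the partition into singletons). *)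

(* Defs.v *)
From mathcomp Require Import all_boot all_order all_algebra.
Set Implicit Arguments. Unset Strict Implicit. Unset Printing Implicit Defensive.
Import GRing.Theory.
Local Open Scope ring_scope.

(* A formal series in the noncommuting variables y_1, y_2, ... over K is
   represented by its coefficient function on words: a word
   y_{i_1} ... y_{i_k} is the sequence [:: i_1; ...; i_k] : seq nat
   (all letters must be >= 1; words containing a 0 are not monomials and
   every series considered here has coefficient 0 on them). *)
Definition series (K : Type) := seq nat -> K.

Definition word_of_len (n : nat) (w : seq nat) : bool :=
  (size w == n) && all (fun i => 0 < i)%N w.

Definition letter (w : seq nat) (j : nat) : nat := nth 0%N w j.

(* A graph on V is its finite
   multiset of edges: a seq of (unordered) pairs of vertices, loops allowed. *)
Definition graph (n : nat) := seq ('I_n * 'I_n).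
Definition plurigraph (n : nat) := seq (graph n).
Definition is_plurigraph n (E : plurigraph n) : bool := all (fun e => e != [::]) E.

(* Y_G : coefficient of the word w is 1 iff w = f(1)...f(n) for a proper
   coloring f : V -> P, i.e. every graph of E has an edge uv with
   f(u) <> f(v). *)
Definition Ychrom (K : nzRingType) n (E : plurigraph n) : series K :=
  fun w => if word_of_len n w &&
              all (fun e : graph n => has (fun uv : 'I_n * 'I_n => letter w uv.1 != letter w uv.2) e) E
           then 1 else 0.

Definition setpart n (P : {set {set 'I_n}}) : bool := partition P [set: 'I_n].

Definition coarser n (pi sigma : {set {set 'I_n}}) : bool :=
  [forall B in pi, exists C in sigma, B \subset C].

Definition msym (K : nzRingType) n (pi : {set {set 'I_n}}) : series K :=
  fun w => if word_of_len n w &&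
              [forall j : 'I_n, forall k : 'I_n,
                 (letter w j == letter w k) ==
                 [exists B in pi, (j \in B) && (k \in B)]]
           then 1 else 0.

Definition psym (K : nzRingType) n (pi : {set {set 'I_n}}) : series K :=
  fun w => \sum_(sigma : {set {set 'I_n}} | setpart sigma && coarser pi sigma)
             msym K sigma w.

(* pi(A): connected components of (V, union of the edge sets of the graphs
   of E indexed by A).  A sub-multiset of E is a subset of the index set
   'I_(size E) (elements of E regarded as distinct). *)
Definition union_adj n (E : plurigraph n) (A : {set 'I_(size E)}) : rel 'I_n :=
  fun u v => [exists i in A,
                ((u, v) \in nth [::] E i) || ((v, u) \in nth [::] E i)].

Definition comp_partition n (E : plurigraph n) (A : {set 'I_(size E)}) : {set {set 'I_n}} :=
  equivalence_partition (fun u v => connect (union_adj A) u v) [set: 'I_n].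

(* Main.v *)
Require Import Defs.
From mathcomp Require Import all_boot all_order all_algebra.
Import GRing.Theory.
Set Implicit Arguments. Unset Strict Implicit.
Local Open Scope ring_scope.

Definition sameb n (P : {set {set 'I_n}}) (j k : 'I_n) : bool :=
  [exists B in P, (j \in B) && (k \in B)].

Lemma sameb_pblock n (P : {set {set 'I_n}}) j k :
  partition P [set: 'I_n] -> sameb P j k = (k \in pblock P j).
Proof.
case/and3P => /eqP cov tri _.
apply/existsP/idP.
  case=> B /andP[BP /andP[jB kB]]; by rewrite (def_pblock tri BP jB).
move=> kp; exists (pblock P j); rewrite pblock_mem ?cov ?inE //= kp andbT.
by rewrite mem_pblock cov inE.
Qed.

Lemma part_eq n (P Q : {set {set 'I_n}}) :
  partition P [set: 'I_n] -> partition Q [set: 'I_n] ->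
  (forall j k, sameb P j k = sameb Q j k) -> P = Q.
Proof.
wlog suff: P Q / partition P [set: 'I_n] -> partition Q [set: 'I_n] ->
  (forall j k, sameb P j k = sameb Q j k) -> P \subset Q.
  by move=> H pP pQ e; apply/eqP; rewrite eqEsubset !H.
move=> pP pQ e; apply/subsetP => B BP.
have /set0Pn[x xB] : B != set0.
  by apply: contraTneq BP => ->; case/and3P: pP.
have [/eqP covP triP _] := and3P pP.
have [/eqP covQ triQ _] := and3P pQ.
rewrite -(def_pblock triP BP xB).
have -> : pblock P x = pblock Q x.
  by apply/setP => k; rewrite -!sameb_pblock // e.
by rewrite pblock_mem // covQ inE.
Qed.

Definition kp n (f : 'I_n -> nat) : {set {set 'I_n}} :=
  equivalence_partition (fun j k => f j == f k) [set: 'I_n].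

Lemma kp_eqrel n (f : 'I_n -> nat) :
  {in [set: 'I_n] & &, equivalence_rel (fun j k => f j == f k)}.
Proof. by move=> x y z _ _ _; split=> [|/eqP ->]. Qed.

Lemma kp_part n (f : 'I_n -> nat) : partition (kp f) [set: 'I_n].
Proof. exact: equivalence_partitionP (kp_eqrel f). Qed.

Lemma sameb_kp n (f : 'I_n -> nat) j k : sameb (kp f) j k = (f j == f k).
Proof.
by rewrite sameb_pblock ?kp_part // (pblock_equivalence_partition (kp_eqrel f)) ?inE.
Qed.

Lemma msym_val (K : nzRingType) n (sigma : {set {set 'I_n}}) w :
  setpart sigma ->
  msym K sigma w = if word_of_len n w && (sigma == kp (fun j => letter w j)) then 1 else 0.
Proof.
move=> sp; rewrite /msym; congr (if _ then _ else _); congr (_ && _).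
apply/forallP/eqP.
  move=> H; apply: part_eq => //; first exact: kp_part.
  by move=> j k; rewrite sameb_kp; move/forallP: (H j) => /(_ k) /eqP ->.
move=> ->  j; apply/forallP => k; by rewrite -/(sameb _ j k) sameb_kp.
Qed.

Lemma psym_val (K : nzRingType) n (pi : {set {set 'I_n}}) w :
  psym K pi w = if word_of_len n w && coarser pi (kp (fun j => letter w j)) then 1 else 0.
Proof.
rewrite /psym.
under eq_bigr => s /andP[sp _] do rewrite msym_val //.
case: (word_of_len n w) => /=; last by rewrite big1.
rewrite -big_mkcondr /=.
case cp: (coarser pi _).
  rewrite (eq_bigl (fun s => s == kp (fun j => letter w j))) ?big_pred1_eq //.
  move=> s /=; case: (boolP (s == _)) => [/eqP ->|_]; rewrite ?andbF ?andbT //.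
  by rewrite cp /setpart kp_part.
by rewrite big_pred0 // => s; case: (boolP (s == _)) => [/eqP ->|_]; rewrite ?andbF ?andbT // cp andbF.
Qed.

Lemma coarser_kp n (pi : {set {set 'I_n}}) (f : 'I_n -> nat) :
  partition pi [set: 'I_n] ->
  coarser pi (kp f) = [forall j, forall k, sameb pi j k ==> (f j == f k)].
Proof.
move=> pp; apply/forall_inP/forallP.
  move=> H j; apply/forallP => k; apply/implyP => /existsP[B /andP[BP /andP[jB kB]]].
  have /existsP[C /andP[CP /subsetP BC]] := H B BP.
  by rewrite -sameb_kp; apply/existsP; exists C; rewrite CP !BC.
move=> H B BP.
have /set0Pn[x xB] : B != set0 by apply: contraTneq BP => ->; case/and3P: pp.
apply/existsP; exists (pblock (kp f) x).
rewrite pblock_mem; last by have [/eqP -> _ _] := and3P (kp_part f); rewrite inE.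
apply/subsetP => y yB; rewrite -sameb_pblock ?kp_part // sameb_kp.
by move/forallP: (H x) => /(_ y) /implyP; apply; apply/existsP; exists B; rewrite BP xB yB.
Qed.

Lemma union_sym n (E : plurigraph n) (A : {set 'I_(size E)}) : symmetric (union_adj A).
Proof.
move=> u v; apply/existsP/existsP => -[i /andP[iA h]]; exists i; by rewrite iA orbC.
Qed.

Lemma conn_eqrel n (E : plurigraph n) (A : {set 'I_(size E)}) :
  {in [set: 'I_n] & &, equivalence_rel (fun u v => connect (union_adj A) u v)}.
Proof.
move=> x y z _ _ _; split; first exact: connect0.
move=> cxy; apply/idP/idP => [cxz|cyz].
  apply: connect_trans cxz; by rewrite (sym_connect_sym (union_sym A)).
exact: connect_trans cxy cyz.
Qed.

Lemma comp_part n (E : plurigraph n) (A : {set 'I_(size E)}) :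
  partition (comp_partition A) [set: 'I_n].
Proof. exact: equivalence_partitionP (conn_eqrel A). Qed.

Lemma sameb_comp n (E : plurigraph n) (A : {set 'I_(size E)}) j k :
  sameb (comp_partition A) j k = connect (union_adj A) j k.
Proof.
by rewrite sameb_pblock ?comp_part // (pblock_equivalence_partition (conn_eqrel A)) ?inE.
Qed.

Definition mono n (E : plurigraph n) (f : 'I_n -> nat) (i : 'I_(size E)) : bool :=
  all (fun uv : 'I_n * 'I_n => f uv.1 == f uv.2) (nth [::] E i).

Lemma conn_mono n (E : plurigraph n) (A : {set 'I_(size E)}) (f : 'I_n -> nat) :
  [forall j, forall k, connect (union_adj A) j k ==> (f j == f k)] =
  [forall i in A, mono f i].
Proof.
apply/forallP/forall_inP.
  move=> H i iA; apply/allP => -[u v] uvE /=.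
  move/forallP: (H u) => /(_ v) /implyP; apply; apply: connect1.
  by apply/existsP; exists i; rewrite iA uvE.
move=> H j; apply/forallP => k; apply/implyP => /connectP[p pth ->] {k}.
elim: p j pth => //= y p IH j /andP[Rjy /IH /eqP <-].
case/existsP: Rjy => i /andP[iA /orP[h|h]]; have /allP := H i iA.
  by move=> /(_ _ h).
by move=> /(_ _ h) /= /eqP ->.
Qed.

Lemma prod_bool (K : comNzRingType) (I : finType) (P : pred I) (b : I -> bool) :
  \prod_(i | P i) ((b i)%:R : K) = ([forall i, P i ==> b i])%:R.
Proof.
case: (boolP [forall i, _]) => [/forallP H|/forallPn[i]].
  by rewrite big1 // => i Pi; move/implyP: (H i) => /(_ Pi) ->.
rewrite negb_imply => /andP[Pi nbi].
by rewrite (bigD1 i) //= (negbTE nbi) mul0r.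
Qed.

Lemma alt_sum (K : comNzRingType) m (b : 'I_m -> bool) :
  \sum_(A : {set 'I_m}) (-1) ^+ #|A| * ([forall i in A, b i])%:R =
  \prod_i (1 - ((b i)%:R : K)).
Proof.
rewrite (eq_bigr (fun i => - (b i)%:R + 1)); last by move=> i _; rewrite addrC.
rewrite bigA_distr; apply: eq_bigr => A _.
rewrite -big_mkcond /=.
under eq_bigr => i _ do rewrite -mulN1r.
by rewrite big_split /= prodr_const prod_bool.
Qed.

Lemma coarser_comp n (E : plurigraph n) (A : {set 'I_(size E)}) (f : 'I_n -> nat) :
  coarser (comp_partition A) (kp f) = [forall i in A, mono f i].
Proof.
rewrite coarser_kp ?comp_part // -conn_mono.
apply: eq_forallb => j; apply: eq_forallb => k; by rewrite sameb_comp.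
Qed.

Lemma if10 (K : nzRingType) (b : bool) : (if b then 1 else 0) = (b%:R : K).
Proof. by case: b. Qed.


Theorem theorem2p6 (K : fieldType) (Kchar0 : [pchar K] =i pred0)
  (n : nat) (E : plurigraph n) (HE : is_plurigraph E) :
  forall w : seq nat,
    Ychrom K E w =
    \sum_(A : {set 'I_(size E)}) (-1) ^+ #|A| * psym K (comp_partition A) w.
Proof.
move=> w.
under eq_bigr => A _ do rewrite psym_val coarser_comp.
rewrite /Ychrom; case: (word_of_len n w) => /=; last first.
  by rewrite big1 // => A _; rewrite mulr0.
under eq_bigr => A _ do rewrite if10.
rewrite alt_sum.
rewrite (eq_bigr (fun i => ((~~ mono (fun j => letter w j) i)%:R : K))); last first.
  by move=> i _; case: (mono _ i); rewrite ?subrr ?subr0.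
rewrite prod_bool if10; congr (_%:R); congr (nat_of_bool _).
apply/idP/idP => [/(all_nthP [::]) H|/forallP H].
  apply/forallP => i; rewrite /mono -has_predC; exact: H.
apply/(all_nthP [::]) => i ilt.
by have := H (Ordinal ilt); rewrite /= /mono -has_predC.
Qed.
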